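(* Consider Algorithm 3 (described in the context) under the Standing Assumption, Matrix Assumption and Gradient Assumption of the context. For all $k\in\mathbb{N}$, $$g_k^Td_k\ge\mathbb{E}_k[\bar g_k^T\bar d_k]\ge g_k^Td_k-\zeta^{-1}M\qquad\text{and}\qquad d_k^TH_kd_k\le\mathbb{E}_k[\bar d_k^TH_k\bar d_k].$$
   Context: Problem: $\min_x f(x)$ s.t. $c(x)=0$, $f(x)=\mathbb{E}[F(x,\omega)]$, $c:\mathbb{R}^n\to\mathbb{R}^m$ deterministic. Notation: $g_k=\nabla f(x_k)$, $c_k=c(x_k)$, $J_k=\nabla c(x_k)^T$; $\Delta q(x,\tau,g,H,d)=-\tau(g^Td+\frac12\max\{d^THd,0\})+\|c(x)\|_1$. Standing Assumption: an open convex set $\mathcal X$ contains all iterates; $f$ is $C^1$, bounded below on $\mathcal X$, $\nabla f$ bounded and $L$-Lipschitz on $\mathcal X$; $c$, $\nabla c^T$ bounded on $\mathcal X$; $\nabla c_i$ is $\gamma_i$-Lipschitz on $\mathcal X$; singular values of $\nabla c(x)^T$ bounded away from zero uniformly over $\mathcal X$; $\Gamma:=\sum_i\gamma_i$. Matrix Assumption: deterministic symmetric $H_k$, chosen independently of the stochastic gradients, with $\|H_k\|_2\le\kappa_H$ and $u^TH_ku\ge\zeta\|u\|_2^2$ whenever $J_ku=0$. Algorithm 3 (inputs $x_0$, $\bar\tau_{-1}>0$, $\epsilon,\sigma\in(0,1)$, $\bar\xi_{-1}>0$, $\{\beta_k\}\subset(0,1]$, $\theta\ge0$): at iteration $k$,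 obtain stochastic gradient $\bar g_k$; $(\bar d_k,\bar y_k)$ solves $H_k\bar d_k+J_k^T\bar y_k=-\bar g_k$, $J_k\bar d_k=-c_k$ (assumed $\bar d_k\neq0$). $\bar\tau_k^{trial}=\infty$ if $\bar g_k^T\bar d_k+\max\{\bar d_k^TH_k\bar d_k,0\}\le0$, else $\frac{(1-\sigma)\|c_k\|_1}{\bar g_k^T\bar d_k+\max\{\bar d_k^TH_k\bar d_k,0\}}$; $\bar\tau_k=\bar\tau_{k-1}$ if $\bar\tau_{k-1}\le\bar\tau_k^{trial}$, else $(1-\epsilon)\bar\tau_k^{trial}$. $\bar\xi_k^{trial}=\frac{\Delta q(x_k,\bar\tau_k,\bar g_k,H_k,\bar d_k)}{\bar\tau_k\|\bar d_k\|_2^2}$; $\bar\xi_k=\bar\xi_{k-1}$ if $\bar\xi_{k-1}\le\bar\xi_k^{trial}$, else $(1-\epsilon)\bar\xi_k^{trial}$. With $D_k=(\bar\tau_kL+\Gamma)\|\bar d_k\|_2^2$, $\hat a_k=\beta_k\Delta q(x_k,\bar\tau_k,\bar g_k,H_k,\bar d_k)/D_k$, $\tilde a_k=\hat a_k-4\|c_k\|_1/D_k$, project both onto $[a_k,a_k+\theta\beta_k^2]$ with $a_k=\frac{\beta_k\bar\xi_k\bar\tau_k}{\bar\tau_kL+\Gamma}$ to get $\widehat\alpha_k,\widetilde\alpha_k$; $\bar\alpha_k=\widehat\alpha_k$ if $\widehat\alpha_k<1$, $1$ if $\widetilde\alpha_k\le1\le\widehat\alpha_k$, $\widetilde\alpha_k$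 if $\widetilde\alpha_k>1$; $x_{k+1}=x_k+\bar\alpha_k\bar d_k$. Gradient Assumption: $\mathbb{E}_k[\bar g_k]=g_k$ and $\mathbb{E}_k[\|\bar g_k-g_k\|_2^2]\le M$, where $\mathbb{E}_k$ is expectation w.r.t. $\omega$ conditioned on the algorithm having reached $x_k$ at iteration $k$. Deterministic counterpart: $(d_k,y_k)$ solves $H_kd_k+J_k^Ty_k=-g_k$, $J_kd_k=-c_k$. *)

(* Defs.v *)
From HB Require Import structures.
From mathcomp Require Import all_boot all_order all_algebra.
From mathcomp Require Import all_classical all_reals all_analysis.
Set Implicit Arguments. Unset Strict Implicit. Unset Printing Implicit Defensive.
Import Order.TTheory GRing.Theory Num.Theory.
Local Open Scope ring_scope.

Definition dotv {R : realType} {n : nat} (u v : 'cV[R]_n) : R := (u^T *m v) 0 0.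
Definition sqnorm {R : realType} {n : nat} (u : 'cV[R]_n) : R := dotv u u.

(* Main.v *)
Require Import Defs.
From HB Require Import structures.
From mathcomp Require Import all_boot all_order all_algebra.
From mathcomp Require Import all_classical all_reals all_analysis.
From mathcomp Require Import ring lra measurable_realfun measurable_fun_approximation.
Import Order.TTheory GRing.Theory Num.Theory.
Local Open Scope ring_scope.

Section LA.
Context {R : realType}.

Lemma dotvE {n} (u v : 'cV[R]_n) : dotv u v = \sum_i u i 0 * v i 0.
Proof. by rewrite /dotv mxE; apply: eq_bigr => i _; rewrite mxE. Qed.

Lemma dotvC {n} (u v : 'cV[R]_n) : dotv u v = dotv v u.
Proof. by rewrite !dotvE; apply: eq_bigr => i _; rewrite mulrC. Qed.

Lemma dotvDl {n} (u w v : 'cV[R]_n) : dotv (u + w) v = dotv u v + dotv w v.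
Proof. by rewrite !dotvE -big_split; apply: eq_bigr => i _; rewrite mxE mulrDl. Qed.

Lemma dotvDr {n} (u w v : 'cV[R]_n) : dotv v (u + w) = dotv v u + dotv v w.
Proof. by rewrite dotvC dotvDl !(dotvC v). Qed.

Lemma dotvNl {n} (u v : 'cV[R]_n) : dotv (- u) v = - dotv u v.
Proof. by rewrite !dotvE -sumrN; apply: eq_bigr => i _; rewrite mxE mulNr. Qed.

Lemma dotvNr {n} (u v : 'cV[R]_n) : dotv v (- u) = - dotv v u.
Proof. by rewrite dotvC dotvNl dotvC. Qed.

Lemma dotvBl {n} (u w v : 'cV[R]_n) : dotv (u - w) v = dotv u v - dotv w v.
Proof. by rewrite dotvDl dotvNl. Qed.

Lemma dotvBr {n} (u w v : 'cV[R]_n) : dotv v (u - w) = dotv v u - dotv v w.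
Proof. by rewrite dotvDr dotvNr. Qed.

Lemma dotvZl {n} a (u v : 'cV[R]_n) : dotv (a *: u) v = a * dotv u v.
Proof. by rewrite !dotvE mulr_sumr; apply: eq_bigr => i _; rewrite mxE mulrA. Qed.

Lemma dotvZr {n} a (u v : 'cV[R]_n) : dotv v (a *: u) = a * dotv v u.
Proof. by rewrite dotvC dotvZl dotvC. Qed.

Lemma dotv0l {n} (v : 'cV[R]_n) : dotv 0 v = 0.
Proof. by rewrite dotvE big1 // => i _; rewrite mxE mul0r. Qed.

Lemma dotv0r {n} (v : 'cV[R]_n) : dotv v 0 = 0.
Proof. by rewrite dotvC dotv0l. Qed.

Lemma dotv_mul {n p} (A : 'M[R]_(n, p)) u v : dotv u (A *m v) = dotv (A^T *m u) v.
Proof. by rewrite /dotv trmx_mul trmxK mulmxA. Qed.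

Lemma sqnorm_ge0 {n} (u : 'cV[R]_n) : 0 <= sqnorm u.
Proof. by rewrite /sqnorm dotvE sumr_ge0 // => i _; rewrite -expr2 sqr_ge0. Qed.

Lemma sqnorm_eq0 {n} (u : 'cV[R]_n) : sqnorm u = 0 -> u = 0.
Proof.
rewrite /sqnorm dotvE => /eqP; rewrite psumr_eq0 => [/allP H|i _]; last by rewrite -expr2 sqr_ge0.
apply/matrixP => i j; rewrite ord1 mxE.
have := H i (mem_index_enum _); rewrite -expr2 sqrf_eq0 => /eqP //.
Qed.

Lemma unit_of_inj {n} (A : 'M[R]_n) : (forall v : 'cV[R]_n, A *m v = 0 -> v = 0) -> A \in unitmx.
Proof.
move=> Hinj; rewrite -unitmx_tr -row_free_unit -kermx_eq0.
apply/eqP/row_matrixP => i; rewrite row0.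
have h : (row i (kermx A^T)) *m A^T = 0 by rewrite -row_mul mulmx_ker row0.
have := congr1 trmx h; rewrite trmx_mul trmxK trmx0.
by move/Hinj => /(congr1 trmx); rewrite trmxK trmx0.
Qed.

End LA.

Section Meas.
Context {R : realType} {d0 : measure_display} {Omega : measurableType d0}.

Definition mcomp {n} (X : Omega -> 'cV[R]_n) :=
  forall i, measurable_fun setT (fun w => X w i 0).

Lemma mcomp_cst {n} (v : 'cV[R]_n) : mcomp (fun _ => v).
Proof. by move=> i; exact: measurable_cst. Qed.

Lemma mcompD {n} (X Y : Omega -> 'cV[R]_n) : mcomp X -> mcomp Y -> mcomp (fun w => X w + Y w).
Proof.
move=> hX hY i; rewrite (_ : (fun w => _) = (fun w => X w i 0) \+ (fun w => Y w i 0)).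
  exact: measurable_funD.
by apply/funext => w; rewrite mxE.
Qed.

Lemma mcompN {n} (X : Omega -> 'cV[R]_n) : mcomp X -> mcomp (fun w => - X w).
Proof.
move=> hX i; rewrite (_ : (fun w => _) = \- (fun w => X w i 0)).
  exact: measurable_funN.
by apply/funext => w; rewrite mxE.
Qed.

Lemma mcompM {n p} (A : 'M[R]_(p, n)) (X : Omega -> 'cV[R]_n) : mcomp X -> mcomp (fun w => A *m X w).
Proof.
move=> hX i; rewrite (_ : (fun w => _) = (fun w => \sum_j (A i j * X w j 0))).
  apply: measurable_sum => j; apply: measurable_funM => //; exact: measurable_cst.
by apply/funext => w; rewrite mxE.
Qed.

Lemma measurable_dotv {n} (X Y : Omega -> 'cV[R]_n) : mcomp X -> mcomp Y ->
  measurable_fun setT (fun w => dotv (X w) (Y w)).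
Proof.
move=> hX hY; rewrite (_ : (fun w => _) = (fun w => \sum_j (X w j 0 * Y w j 0))).
  by apply: measurable_sum => j; apply: measurable_funM.
by apply/funext => w; rewrite dotvE.
Qed.

Local Open Scope ereal_scope.

Lemma lin_int {n} (mu : probability Omega R) (X : Omega -> 'cV[R]_n)
  (hi : forall i, mu.-integrable setT (fun w => (X w i 0)%:E))
  (h0 : forall i, \int[mu]_w (X w i 0)%:E = 0) (v : 'cV[R]_n) :
  mu.-integrable setT (fun w => (dotv v (X w))%:E) /\ \int[mu]_w (dotv v (X w))%:E = 0.
Proof.
have E : (fun w => (dotv v (X w))%:E) = (fun w => \sum_(j < n) ((v j 0)%:E * (X w j 0)%:E)).
  by apply/funext => w; rewrite dotvE -sumEFin.
have hj : forall j : 'I_n, mu.-integrable setT (fun w => (v j 0)%:E * (X w j 0)%:E).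
  by move=> j; apply: integrableZl.
rewrite E; split; first by apply: integrable_sum.
rewrite integral_sum //; apply: big1 => j _.
by rewrite integralZl // h0 mule0.
Qed.

Lemma int_cst (mu : probability Omega R) (r : R) : \int[mu]_w r%:E = r%:E.
Proof.
have := @integral_cst _ _ _ mu setT measurableT r%:E.
move=> h; transitivity (r%:E * mu setT); first exact: h.
by rewrite probability_setT mule1.
Qed.

End Meas.

Theorem lemma3p8
  (R : realType) (n m : nat)
  (gradf : 'cV[R]_n -> 'cV[R]_n)          (* x |-> grad f(x) *)
  (cfun : 'cV[R]_n -> 'cV[R]_m)           (* x |-> c(x) *)
  (Jac : 'cV[R]_n -> 'M[R]_(m, n))        (* x |-> grad c(x)^T *)
  (x : nat -> 'cV[R]_n)                   (* iterates x_k *)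
  (H : nat -> 'M[R]_n)                    (* matrices H_k *)
  (kappaH zeta sigmaJ M : R)
  (* singular values of J_k = grad c(x_k)^T bounded away from zero *)
  (HsigmaJ : 0 < sigmaJ)
  (HJ : forall k (v : 'cV[R]_m), sigmaJ ^+ 2 * sqnorm v <= sqnorm ((Jac (x k))^T *m v))
  (* Matrix Assumption *)
  (Hzeta : 0 < zeta)
  (Hsym : forall k, (H k)^T = H k)
  (Hbnd : forall k (u : 'cV[R]_n), sqnorm (H k *m u) <= kappaH ^+ 2 * sqnorm u)
  (Hcurv : forall k (u : 'cV[R]_n), Jac (x k) *m u = 0 -> zeta * sqnorm u <= dotv u (H k *m u))
  (* stochastic gradients: at iteration k, gbar k w is the stochastic gradient
     for the sample w, and P k is the distribution of w given that x_k was reached *)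
  (d0 : measure_display) (Omega : measurableType d0)
  (P : nat -> probability Omega R)
  (gbar : nat -> Omega -> 'cV[R]_n)
  (Hmeas : forall k (i : 'I_n), measurable_fun setT (fun w => gbar k w i 0))
  (Hint : forall k (i : 'I_n), (P k).-integrable setT (fun w => (gbar k w i 0)%:E))
  (Hunbiased : forall k (i : 'I_n),
     (\int[P k]_w (gbar k w i 0)%:E = (gradf (x k) i 0)%:E)%E)
  (Hvar : forall k, (\int[P k]_w (sqnorm (gbar k w - gradf (x k)))%:E <= M%:E)%E)
  (* stochastic search directions (dbar_k, ybar_k) *)
  (dbar : nat -> Omega -> 'cV[R]_n) (ybar : nat -> Omega -> 'cV[R]_m)
  (Hsys1 : forall k w, H k *m dbar k w + (Jac (x k))^T *m ybar k w = - gbar k w)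
  (Hsys2 : forall k w, Jac (x k) *m dbar k w = - cfun (x k))
  (Hdnz : forall k w, dbar k w != 0)
  (* deterministic search directions (d_k, y_k) *)
  (d : nat -> 'cV[R]_n) (y : nat -> 'cV[R]_m)
  (Hdsys1 : forall k, H k *m d k + (Jac (x k))^T *m y k = - gradf (x k))
  (Hdsys2 : forall k, Jac (x k) *m d k = - cfun (x k)) :
  forall k : nat,
    ((\int[P k]_w (dotv (gbar k w) (dbar k w))%:E <= (dotv (gradf (x k)) (d k))%:E)
     /\ ((dotv (gradf (x k)) (d k) - zeta^-1 * M)%:E
           <= \int[P k]_w (dotv (gbar k w) (dbar k w))%:E)
     /\ ((dotv (d k) (H k *m d k))%:E
           <= \int[P k]_w (dotv (dbar k w) (H k *m dbar k w))%:E))%E.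
Proof.
move=> k.
set g := gradf (x k). set J := Jac (x k). set Hk := H k.
pose K := block_mx Hk J^T J (0 : 'M[R]_(m, m)).
have Kinj : forall v : 'cV[R]_(n + m), K *m v = 0 -> v = 0.
  move=> v; rewrite -[v]vsubmxK mul_block_col.
  set a := usubmx v; set b := dsubmx v.
  rewrite -col_mx0 => /eq_col_mx [h1 h2]; rewrite mul0mx addr0 in h2.
  have Qa : dotv a (Hk *m a) = 0.
    have -> : Hk *m a = - (J^T *m b) by apply/eqP; rewrite -addr_eq0 h1.
    by rewrite dotvNr dotv_mul trmxK h2 dotv0l oppr0.
  have a0 : a = 0.
    apply: sqnorm_eq0; apply/eqP; rewrite eq_le sqnorm_ge0 andbT.
    have := Hcurv k a h2; rewrite Qa -/Hk => hz.
    by rewrite -(pmulr_rle0 _ Hzeta).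
  rewrite a0 mulmx0 add0r in h1.
  have b0 : b = 0.
    apply: sqnorm_eq0; apply/eqP; rewrite eq_le sqnorm_ge0 andbT.
    have := HJ k b; rewrite -/J h1 /sqnorm dotv0l => hz.
    by rewrite -(pmulr_rle0 _ (exprn_gt0 2 HsigmaJ)).
  by rewrite a0 b0 col_mx0.
have Ku := unit_of_inj K Kinj.
pose W := ulsubmx (invmx K).
have He : forall w, dbar k w - d k = - (W *m (gbar k w - g)).
  move=> w.
  have : K *m col_mx (dbar k w - d k) (ybar k w - y k) = col_mx (- (gbar k w - g)) 0.
    rewrite mul_block_col mul0mx addr0; congr col_mx.
      rewrite !mulmxBr addrACA -opprD Hsys1 Hdsys1 opprB opprK.
      by rewrite addrC.
    by rewrite mulmxBr Hsys2 Hdsys2 subrr.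
  move/(congr1 (mulmx (invmx K))); rewrite mulKmx //.
  rewrite -{1}[invmx K]submxK mul_block_col => /(congr1 usubmx).
  rewrite !col_mxKu mulmx0 addr0 => ->.
  by rewrite mulmxN.
have Sys : forall w, Hk *m (dbar k w - d k) + J^T *m (ybar k w - y k) = - (gbar k w - g).
  move=> w; rewrite !mulmxBr addrACA -opprD Hsys1 Hdsys1 opprB opprK.
  by rewrite addrC.
have Je : forall w, J *m (dbar k w - d k) = 0.
  by move=> w; rewrite mulmxBr Hsys2 Hdsys2 subrr.
pose dl := fun w => gbar k w - g.
pose Q := fun w => dotv (dbar k w - d k) (Hk *m (dbar k w - d k)).
pose l1 := d k - W^T *m g.
pose l3 := W^T *m g + W^T *m g.
have QdE : forall w, dotv (dl w) (dbar k w - d k) = - Q w.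
  move=> w; rewrite /Q.
  have -> : Hk *m (dbar k w - d k) = - dl w - J^T *m (ybar k w - y k).
    by rewrite -(Sys w) addrK.
  by rewrite (dotvBr (- dl w)) dotv_mul trmxK Je dotv0l subr0 dotvNr opprK dotvC.
have F1 : forall w, dotv (gbar k w) (dbar k w) = dotv g (d k) + dotv l1 (dl w) - Q w.
  move=> w.
  have gb : gbar k w = g + dl w by rewrite /dl addrC subrK.
  have db : dbar k w = d k + (dbar k w - d k) by rewrite addrC subrK.
  rewrite {1}gb {1}db dotvDl !(dotvDr (d k) (dbar k w - d k)) QdE.
  rewrite He dotvNr dotv_mul -/(dl w).
  rewrite /l1 (dotvBl (d k) (W^T *m g) (dl w)) (dotvC (dl w) (d k)).
  ring.
have eHd : forall w, dotv (dbar k w - d k) (Hk *m d k) = dotv (W^T *m g) (dl w).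
  move=> w.
  have -> : Hk *m d k = - g - J^T *m y k.
    by rewrite -(Hdsys1 k) addrK.
  rewrite dotvBr dotv_mul trmxK Je dotv0l subr0 dotvNr dotvC He dotvNr opprK.
  by rewrite dotv_mul.
have F3 : forall w, dotv (dbar k w) (Hk *m dbar k w) = dotv (d k) (Hk *m d k) + dotv l3 (dl w) + Q w.
  move=> w.
  have db : dbar k w = d k + (dbar k w - d k) by rewrite addrC subrK.
  rewrite {1 2}db mulmxDr dotvDl !(dotvDr (Hk *m d k) (Hk *m (dbar k w - d k))).
  rewrite (dotv_mul Hk (d k) (dbar k w - d k)) /Hk Hsym -/Hk.
  rewrite (dotvC (Hk *m d k) (dbar k w - d k)) eHd.
  rewrite /l3 (dotvDl (W^T *m g) (W^T *m g) (dl w)) /Q.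
  ring.
have Qlo : forall w, zeta * sqnorm (dbar k w - d k) <= Q w.
  by move=> w; apply: Hcurv; exact: Je.
have Qhi : forall w, zeta * Q w <= sqnorm (dl w).
  move=> w.
  have h0 := sqnorm_ge0 (zeta *: (dbar k w - d k) + dl w).
  move: h0; rewrite /sqnorm dotvDl !(dotvDr (zeta *: (dbar k w - d k)) (dl w)) !dotvZl !dotvZr (dotvC (dbar k w - d k) (dl w)) QdE.
  have := Qlo w; rewrite /sqnorm.
  move: (dotv (dbar k w - d k) (dbar k w - d k)) (Q w) (dotv (dl w) (dl w)) => A B C hAB h.
  have h2 : zeta * (zeta * A) <= zeta * B by rewrite ler_pM2l.
  rewrite !mulrN in h.
  move: h h2 Hzeta; move: (zeta * (zeta * A)) (zeta * B) => X Y.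
  lra.
have mdl : mcomp dl.
  apply: (mcompD (gbar k) (fun _ => - g)); first exact: Hmeas.
  apply: (mcompN (fun _ => g)); exact: mcomp_cst.
have me : mcomp (fun w => dbar k w - d k).
  rewrite (_ : (fun w => _) = (fun w => - (W *m dl w))); last by apply/funext => w; rewrite He.
  apply: (mcompN (fun w => W *m dl w)); exact: mcompM.
have mQ : measurable_fun setT Q by apply: measurable_dotv => //; exact: mcompM.
have msq : measurable_fun setT (fun w => sqnorm (dl w)) by apply: measurable_dotv.
have Qge0 : forall w, 0 <= Q w.
  move=> w; apply: le_trans (Qlo w); apply: mulr_ge0; [exact: ltW | exact: sqnorm_ge0].
have Qle : forall w, Q w <= zeta^-1 * sqnorm (dl w).
  by move=> w; rewrite -(ler_pM2l Hzeta) mulrA mulfV ?gt_eqF // mul1r.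
have dlint : forall i, (P k).-integrable setT (fun w => (dl w i 0)%:E).
  move=> i; rewrite (_ : (fun w => _) = (fun w => (gbar k w i 0)%:E - (g i 0)%:E)%E); last first.
    by apply/funext => w; rewrite /dl !mxE.
  apply: integrableB => //; first exact: Hint.
  exact: finite_measure_integrable_cst.
have dl0 : forall i, (\int[P k]_w (dl w i 0)%:E = 0)%E.
  move=> i; rewrite (_ : (fun w => _) = (fun w => (gbar k w i 0)%:E - (cst (g i 0) w)%:E)%E); last first.
    by apply/funext => w; rewrite /dl !mxE.
  rewrite integralB_EFin //; last exact: finite_measure_integrable_cst.
  by rewrite Hunbiased int_cst subee.
  exact: Hint.
have [L1int L10] := lin_int (P k) _ dlint dl0 l1.
have [L3int L30] := lin_int (P k) _ dlint dl0 l3.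
have sqint : (P k).-integrable setT (fun w => (sqnorm (dl w))%:E).
  apply/integrableP; split; first exact/measurable_EFinP.
  under eq_integral do rewrite gee0_abs ?lee_fin ?sqnorm_ge0 //.
  exact: le_lt_trans (Hvar k) (ltry _).
have sqint' : (P k).-integrable setT (fun w => (zeta^-1 * sqnorm (dl w))%:E).
  rewrite (_ : (fun w => _) = (fun w => (zeta^-1)%:E * (sqnorm (dl w))%:E)%E) //.
  exact: integrableZl.
have Qint : (P k).-integrable setT (fun w => (Q w)%:E).
  apply: le_integrable sqint' => //; first exact/measurable_EFinP.
  move=> w _; rewrite !gee0_abs ?lee_fin //; last by apply: mulr_ge0; [rewrite invr_ge0 ltW | exact: sqnorm_ge0].
have EQfin := integrable_fin_num measurableT Qint.
pose qr := fine (\int[P k]_w (Q w)%:E).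
have EQE : (\int[P k]_w (Q w)%:E = qr%:E)%E by rewrite /qr fineK.
have qr0 : 0 <= qr.
  by rewrite -lee_fin -EQE; apply: integral_ge0 => w _; rewrite lee_fin.
have qrM : qr <= zeta^-1 * M.
  rewrite -lee_fin -EQE.
  have hle : (\int[P k]_w (Q w)%:E <= \int[P k]_w (zeta^-1 * sqnorm (dl w))%:E)%E.
    apply: ge0_le_integral => //.
    - by move=> w _; rewrite lee_fin.
    - exact/measurable_EFinP.
    - by apply/measurable_EFinP; apply: measurable_funM => //; exact: measurable_cst.
    - by move=> w _; rewrite lee_fin.
  apply: (le_trans hle).
  under eq_integral do rewrite EFinM.
  rewrite integralZl // EFinM; apply: lee_wpmul2l; first by rewrite lee_fin invr_ge0 ltW.
  exact: Hvar.
have I1 : (\int[P k]_w (dotv (gbar k w) (dbar k w))%:E = (dotv g (d k))%:E - qr%:E)%E.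
  transitivity (\int[P k]_w (((fun w => (dotv g (d k))%:E + (dotv l1 (dl w))%:E) \- (fun w => (Q w)%:E)) w))%E.
    by apply: eq_integral => w _; rewrite F1.
  rewrite integralB //; last first.
    by apply: integrableD => //; exact: finite_measure_integrable_cst.
  rewrite integralD //; last exact: finite_measure_integrable_cst.
  by rewrite L10 adde0 int_cst EQE.
have I3 : (\int[P k]_w (dotv (dbar k w) (H k *m dbar k w))%:E = (dotv (d k) (H k *m d k))%:E + qr%:E)%E.
  transitivity (\int[P k]_w (((fun w => (dotv (d k) (Hk *m d k))%:E + (dotv l3 (dl w))%:E) \+ (fun w => (Q w)%:E)) w))%E.
    by apply: eq_integral => w _; rewrite F3.
  rewrite integralD //; last first.
    by apply: integrableD => //; exact: finite_measure_integrable_cst.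
  rewrite integralD //; last exact: finite_measure_integrable_cst.
  by rewrite L30 adde0 int_cst EQE.
rewrite I1 I3 -!EFinB -EFinD !lee_fin.
split; [lra | split; lra].
Qed.
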